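(* Let $F$ be an infinite field of prime characteristic $p$, and let $q,k$ be positive integers and $n\geqslant qk$. Let $E_n$ be the natural $n$-dimensional module for $\mathrm{GL}_n(F)$ with standard basis $e_1,\dots,e_n$. Then the $\omega_{qk}$-weight space of the $F\mathrm{GL}_n(F)$-module $L^k(E_n^{\otimes q})$ has dimension $$\dim f_{qk}\bigl(L^k(E_n^{\otimes q})\bigr) = \frac{(qk)!}{k}.$$
   Context: All tensor products are over $F$, and $\mathrm{GL}_n(F)$ acts diagonally on tensor powers. For an $F$-vector space (module) $W$, $L^k(W)$ denotes the $k$th Lie power: the intersection with $W^{\otimes k}$ of the Lie subalgebra of the tensor algebra $T(W)$ (bracket $[x,y]=x\otimes y-y\otimes x$) generated by $W$. Here $W=E_n^{\otimes q}$, so $L^k(E_n^{\otimes q})$ is a $\mathrm{GL}_n(F)$-submodule of $E_n^{\otimes qk}$. For $t_1,\dots,t_n\in F^\times$ let $d(t_1,\dots,t_n)$ be the diagonal matrix with these entries. For a polynomial $\mathrm{GL}_n(F)$-module $M$ homogeneous of degree $r$ and $\alpha=(\alpha_1,\dots,\alpha_n)$ a tuple of non-negative integers summing to $r$, the weight space is $M^\alpha=\{u\in M : u\cdot d(t_1,\dots,t_n)=t_1^{\alpha_1}\cdots t_n^{\alpha_n}u \ \forall t_i\in F^\times\}$. For $r\le n$, $\omega_r=(1,\dots,1,0,\dots,0)$ with $r$ ones, and the Schur functor is $f_r(M)=M^{\omega_r}$. *)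

(* Defs.v *)
From mathcomp Require Import all_boot all_order all_algebra.
Set Implicit Arguments. Unset Strict Implicit. Unset Printing Implicit Defensive.
Import GRing.Theory.
Local Open Scope ring_scope.

(* The (completed) tensor algebra T(E_n) over F: a tensor is a function from
   words (sequences of basis indices of E_n) to coefficients; the word
   [:: i_1; ...; i_m] stands for e_{i_1} (x) ... (x) e_{i_m}.  Homogeneous
   elements of degree m (elements of E_n^{(x) m}) are functions supported on
   words of length m. *)
Definition tensor (F : fieldType) (n : nat) := seq 'I_n -> F.

Definition homog (F : fieldType) (n m : nat) (u : tensor F n) : Prop :=
  forall w : seq 'I_n, size w != m -> u w = 0.

(* Product of the tensor algebra (concatenation of words). *)
Definition tmul (F : fieldType) (n : nat) (u v : tensor F n) : tensor F n :=
  fun w => \sum_(i < (size w).+1) u (take i w) * v (drop i w).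

Definition tbracket (F : fieldType) (n : nat) (u v : tensor F n) : tensor F n :=
  fun w => tmul u v w - tmul v u w.

Inductive inLieGen (F : fieldType) (n q : nat) : tensor F n -> Prop :=
| LG_gen u : @homog F n q u -> @inLieGen F n q u
| LG_add u v : @inLieGen F n q u -> @inLieGen F n q v ->
    @inLieGen F n q (fun w => u w + v w)
| LG_scale (c : F) u : @inLieGen F n q u -> @inLieGen F n q (fun w => c * u w)
| LG_bracket u v : @inLieGen F n q u -> @inLieGen F n q v ->
    @inLieGen F n q (tbracket u v).

(* The Lie power L^k(E_n^{(x) q}) = (Lie subalgebra generated by W) /\ W^{(x) k},
   with W^{(x) k} = E_n^{(x) qk}. *)
Definition LiePower (F : fieldType) (n q k : nat) (u : tensor F n) : Prop :=
  @inLieGen F n q u /\ @homog F n (q * k) u.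

(* Right action of the diagonal matrix d(t_1,...,t_n) on tensors:
   e_{i_1} (x) ... (x) e_{i_m} . d(t) = t_{i_1} ... t_{i_m} e_{i_1} (x) ... *)
Definition diag_act (F : fieldType) (n : nat) (t : 'I_n -> F) (u : tensor F n)
  : tensor F n := fun w => (\prod_(a <- w) t a) * u w.

Definition weight_space (F : fieldType) (n : nat) (M : tensor F n -> Prop)
  (alpha : 'I_n -> nat) (u : tensor F n) : Prop :=
  M u /\ forall t : 'I_n -> F, (forall i, t i != 0) ->
    forall w, diag_act t u w = (\prod_(i < n) t i ^+ alpha i) * u w.

Definition omega (n r : nat) : 'I_n -> nat := fun i => (i < r)%N.

Definition schur_functor (F : fieldType) (n r : nat) (M : tensor F n -> Prop)
  : tensor F n -> Prop := weight_space M (@omega n r).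

Definition lincomb (F : fieldType) (n d : nat) (c : 'I_d -> F)
  (b : 'I_d -> tensor F n) : tensor F n :=
  fun w => \sum_(i < d) c i * b i w.

Definition has_dim (F : fieldType) (n : nat) (P : tensor F n -> Prop) (d : nat)
  : Prop :=
  exists b : 'I_d -> tensor F n,
    (forall i, P (b i)) /\
    (forall c : 'I_d -> F, (forall w, lincomb c b w = 0) -> forall i, c i = 0) /\
    (forall u, P u -> exists c : 'I_d -> F, forall w, u w = lincomb c b w).

Definition infinite_field (F : fieldType) : Prop :=
  forall s : seq F, exists x : F, x \notin s.

(* Main.v *)
Require Import Defs.
From mathcomp Require Import all_boot all_order all_algebra all_fingroup.
From mathcomp Require Import ring zify.
From Stdlib Require Import FunctionalExtensionality Classical.
Set Implicit Arguments. Unset Strict Implicit. Unset Printing Implicit Defensive.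
Import GRing.Theory.
Module Part1.
Local Open Scope ring_scope.

Section T.
Variables (F : fieldType) (n : nat).
Notation tens := (tensor F n).

Lemma tmul_nil (f g : tens) : tmul f g [::] = f [::] * g [::].
Proof. by rewrite /tmul /= big_ord_recl big_ord0 addr0. Qed.

Lemma tmul_cons (f g : tens) a w :
  tmul f g (a :: w) = f [::] * g (a :: w) + tmul (fun v => f (a :: v)) g w.
Proof. by rewrite /tmul /= big_ord_recl /=. Qed.

Definition tadd (f g : tens) : tens := fun w => f w + g w.
Definition tscale (c : F) (f : tens) : tens := fun w => c * f w.
Definition tzero : tens := fun _ => 0.

Lemma tmul_addl (f g h : tens) : tmul (tadd f g) h = tadd (tmul f h) (tmul g h).
Proof.
apply: functional_extensionality => w; rewrite /tmul /tadd -big_split /=.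
by apply: eq_bigr => i _; rewrite mulrDl.
Qed.
Lemma tmul_addr (f g h : tens) : tmul h (tadd f g) = tadd (tmul h f) (tmul h g).
Proof.
apply: functional_extensionality => w; rewrite /tmul /tadd -big_split /=.
by apply: eq_bigr => i _; rewrite mulrDr.
Qed.
Lemma tmul_scalel c (f h : tens) : tmul (tscale c f) h = tscale c (tmul f h).
Proof.
apply: functional_extensionality => w; rewrite /tmul /tscale mulr_sumr.
by apply: eq_bigr => i _; rewrite mulrA.
Qed.
Lemma tmul_scaler c (f h : tens) : tmul h (tscale c f) = tscale c (tmul h f).
Proof.
apply: functional_extensionality => w; rewrite /tmul /tscale mulr_sumr.
by apply: eq_bigr => i _; rewrite mulrCA.
Qed.
Lemma tmul_0l (h : tens) : tmul tzero h = tzero.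
Proof. by apply: functional_extensionality => w; rewrite /tmul big1 // => i _; rewrite mul0r. Qed.
Lemma tmul_0r (h : tens) : tmul h tzero = tzero.
Proof. by apply: functional_extensionality => w; rewrite /tmul big1 // => i _; rewrite mulr0. Qed.

Lemma tmul_assoc (f g h : tens) w : tmul (tmul f g) h w = tmul f (tmul g h) w.
Proof.
elim: w f => [|a w IH] f; first by rewrite !tmul_nil mulrA.
rewrite !tmul_cons !tmul_nil.
have -> : (fun v => tmul f g (a :: v)) =
   tadd (tscale (f [::]) (fun v => g (a :: v))) (tmul (fun v => f (a :: v)) g).
  by apply: functional_extensionality => v; rewrite tmul_cons.
rewrite tmul_addl tmul_scalel /tadd /tscale IH; ring.
Qed.

Definition delta (b : seq 'I_n) : tens := fun w => (w == b)%:R.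

Lemma tmul_delta X Y w : tmul (delta X) (delta Y) w = delta (X ++ Y) w.
Proof.
elim: w X => [|a w IH] X.
  by rewrite tmul_nil /delta; case: X; case: Y => //= *; rewrite ?mul1r ?mul0r ?mulr0.
rewrite tmul_cons; case: X => [|b X].
  have -> : (fun v => delta [::] (a :: v)) = tzero by apply: functional_extensionality.
  by rewrite tmul_0l /tzero addr0 /delta eqxx mul1r.
have -> : (fun v => delta (b :: X) (a :: v)) = tscale (a == b)%:R (delta X).
  apply: functional_extensionality => v; rewrite /tscale /delta eqseq_cons.
  by case: (a == b); rewrite ?mul1r ?mul0r.
rewrite tmul_scalel /tscale IH /delta /= mul0r add0r eqseq_cons.
by case: (a == b); rewrite ?mul1r ?mul0r.
Qed.

End T.

Section T2.
Variables (F : fieldType) (n : nat).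
Notation tens := (tensor F n).
Notation tadd := (@tadd F n).
Notation tscale := (@tscale F n).
Notation tzero := (@tzero F n).
Notation delta := (@delta F n).

Lemma tbrE (f g : tens) : tbracket f g = tadd (tmul f g) (tscale (-1) (tmul g f)).
Proof. by apply: functional_extensionality => w; rewrite /tbracket /tadd /tscale mulN1r. Qed.

Lemma tbr_addl (f g h : tens) : tbracket (tadd f g) h = tadd (tbracket f h) (tbracket g h).
Proof.
apply: functional_extensionality => w; rewrite /tbracket tmul_addl tmul_addr /tadd; ring.
Qed.
Lemma tbr_addr (f g h : tens) : tbracket h (tadd f g) = tadd (tbracket h f) (tbracket h g).
Proof.
apply: functional_extensionality => w; rewrite /tbracket tmul_addl tmul_addr /tadd; ring.
Qed.
Lemma tbr_scalel c (f h : tens) : tbracket (tscale c f) h = tscale c (tbracket f h).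
Proof.
apply: functional_extensionality => w; rewrite /tbracket tmul_scalel tmul_scaler /tscale; ring.
Qed.
Lemma tbr_scaler c (f h : tens) : tbracket h (tscale c f) = tscale c (tbracket h f).
Proof.
apply: functional_extensionality => w; rewrite /tbracket tmul_scalel tmul_scaler /tscale; ring.
Qed.
Lemma tbr_0l (h : tens) : tbracket tzero h = tzero.
Proof.
apply: functional_extensionality => w; rewrite /tbracket tmul_0l tmul_0r /tzero; ring.
Qed.
Lemma tbr_0r (h : tens) : tbracket h tzero = tzero.
Proof.
apply: functional_extensionality => w; rewrite /tbracket tmul_0l tmul_0r /tzero; ring.
Qed.
Lemma tbr_anti (f g : tens) : tbracket g f = tscale (-1) (tbracket f g).
Proof. apply: functional_extensionality => w; rewrite /tbracket /tscale; ring. Qed.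

Lemma jacobi (f g h : tens) : tbracket f (tbracket g h) =
  tadd (tbracket (tbracket f g) h) (tscale (-1) (tbracket (tbracket f h) g)).
Proof.
apply: functional_extensionality => w.
rewrite !tbrE !(tmul_addl, tmul_addr, tmul_scalel, tmul_scaler) /tadd /tscale.
rewrite !tmul_assoc; ring.
Qed.

Inductive tspan (P : tens -> Prop) : tens -> Prop :=
| sp_gen f : P f -> tspan P f
| sp0 : tspan P tzero
| sp_add f g : tspan P f -> tspan P g -> tspan P (tadd f g)
| sp_scale c f : tspan P f -> tspan P (tscale c f).

Lemma span_flat (P Q : tens -> Prop) f :
  (forall g, P g -> tspan Q g) -> tspan P f -> tspan Q f.
Proof.
move=> PQ; elim=> [g /PQ //| |g h _ ? _ ?|c g _ ?]; by constructor.
Qed.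

Lemma span_mono (P Q : tens -> Prop) f :
  (forall g, P g -> Q g) -> tspan P f -> tspan Q f.
Proof. by move=> PQ; apply: span_flat => g /PQ; apply: sp_gen. Qed.

Lemma span_bracketl (P Q : tens -> Prop) f h :
  tspan P f -> (forall g, P g -> tspan Q (tbracket g h)) -> tspan Q (tbracket f h).
Proof.
move=> sf PQ; elim: sf => [g /PQ //||g g' _ ? _ ?|c g _ ?].
- by rewrite tbr_0l; apply: sp0.
- by rewrite tbr_addl; apply: sp_add.
- by rewrite tbr_scalel; apply: sp_scale.
Qed.

Lemma span_bracketr (P Q : tens -> Prop) f h :
  tspan P f -> (forall g, P g -> tspan Q (tbracket h g)) -> tspan Q (tbracket h f).
Proof.
move=> sf PQ; elim: sf => [g /PQ //||g g' _ ? _ ?|c g _ ?].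
- by rewrite tbr_0r; apply: sp0.
- by rewrite tbr_addr; apply: sp_add.
- by rewrite tbr_scaler; apply: sp_scale.
Qed.

Lemma span_sum (P : tens -> Prop) (I : Type) (s : seq I) (c : I -> F) (g : I -> tens) :
  (forall i, P (g i)) -> tspan P (fun w => \sum_(i <- s) c i * g i w).
Proof.
move=> Pg; elim: s => [|i s IH].
  have -> : (fun w : seq 'I_n => \sum_(i <- [::]) c i * g i w) = tzero.
    by apply: functional_extensionality => w; rewrite big_nil.
  exact: sp0.
have -> : (fun w => \sum_(j <- i :: s) c j * g j w) =
   tadd (tscale (c i) (g i)) (fun w => \sum_(j <- s) c j * g j w).
  by apply: functional_extensionality => w; rewrite big_cons.
by apply: sp_add => //; apply: sp_scale; apply: sp_gen.
Qed.

Inductive tree := Leaf of seq 'I_n | Node of tree & tree.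

Fixpoint eval (t : tree) : tens :=
  match t with Leaf b => delta b | Node t1 t2 => tbracket (eval t1) (eval t2) end.
Fixpoint leaves (t : tree) : seq (seq 'I_n) :=
  match t with Leaf b => [:: b] | Node t1 t2 => leaves t1 ++ leaves t2 end.

Lemma tmul_neq0 (f g : tens) w : tmul f g w != 0 ->
  exists i, f (take i w) != 0 /\ g (drop i w) != 0.
Proof.
move=> H.
have : ~~ [forall i : 'I_(size w).+1, f (take i w) * g (drop i w) == 0].
  apply: contra H => /forallP Hall; apply/eqP; rewrite /tmul big1 // => i _; exact/eqP.
by move/forallPn=> [i]; rewrite mulf_eq0 negb_or => /andP[? ?]; exists i.
Qed.

Lemma eval_support t w : eval t w != 0 -> perm_eq w (flatten (leaves t)).
Proof.
elim: t w => [b|t1 IH1 t2 IH2] w /=.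
  rewrite /delta cats0 => H; have /eqP -> : w == b by apply: contraNT H => /negbTE ->.
  exact: perm_refl.
rewrite /tbracket flatten_cat => H.
have : (tmul (eval t1) (eval t2) w != 0) || (tmul (eval t2) (eval t1) w != 0).
  by apply: contraR H; rewrite negb_or !negbK => /andP[/eqP -> /eqP ->]; rewrite subrr.
case/orP => /tmul_neq0 [i [h1 h2]]; rewrite -(cat_take_drop i w).
- by apply: perm_cat; [apply: IH1 | apply: IH2].
- apply: perm_trans (perm_cat (IH2 _ h1) (IH1 _ h2)) _.
  by rewrite perm_catC.
Qed.

Lemma eval_inLie q t : all (fun b => size b == q) (leaves t) -> @inLieGen F n q (eval t).
Proof.
elim: t => [b|t1 IH1 t2 IH2] /=.
  rewrite andbT => /eqP Hb; apply: LG_gen => w Hw; rewrite /delta.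
  have /negbTE -> : w != b by apply: contraNneq Hw => ->; rewrite Hb.
  by [].
by rewrite all_cat => /andP[/IH1 ? /IH2 ?]; apply: LG_bracket.
Qed.
End T2.

Lemma rem_cat_in (T : eqType) (a : T) l1 l2 : a \in l1 -> rem a (l1 ++ l2) = rem a l1 ++ l2.
Proof.
elim: l1 => //= b l1 IH; rewrite in_cons.
case: (boolP (b == a)) => [/eqP ->|ba] //=; rewrite eq_sym (negbTE ba) /= => H.
by rewrite IH.
Qed.
Lemma rem_cat_notin (T : eqType) (a : T) l1 l2 : a \notin l1 -> rem a (l1 ++ l2) = l1 ++ rem a l2.
Proof.
elim: l1 => //= b l1 IH; rewrite in_cons negb_or => /andP[ab /IH ->].
by rewrite eq_sym (negbTE ab).
Qed.

Section T3.
Variables (F : fieldType) (n : nat).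
Notation tens := (tensor F n).
Notation tadd := (@tadd F n).
Notation tscale := (@tscale F n).
Notation tzero := (@tzero F n).
Notation delta := (@delta F n).
Notation tree := (tree n).
Notation eval := (@eval F n).
Notation tspan := (@tspan F n).

Definition TP q (g : tens) := exists t : tree, all (fun b => size b == q) (leaves t) /\ g = eval t.

Lemma lie_span q u : @inLieGen F n q u -> tspan (TP q) u.
Proof.
elim=> {u} [u Hu|u v _ Hu _ Hv|c u _ Hu|u v _ Hu _ Hv].
- have -> : u = (fun w => \sum_(b <- enum {: q.-tuple 'I_n}) u b * delta b w).
    apply: functional_extensionality => w; rewrite big_enum /=.
    case: (boolP (size w == q)) => Hw.
      rewrite (bigD1 (Tuple Hw)) //= big1 ?addr0 /delta ?eqxx ?mulr1 //.
      move=> b Hb; case: eqP => [E|]; last by rewrite mulr0.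
      by case/eqP: Hb; apply: val_inj; rewrite /= E.
    rewrite Hu // big1 // => b _; rewrite /delta.
    have /negbTE -> : w != b by apply: contraNneq Hw => ->; rewrite size_tuple.
    by rewrite mulr0.
  apply: span_sum => b; exists (Leaf b); by rewrite /= size_tuple eqxx.
- exact: (sp_add Hu Hv).
- exact: (sp_scale c Hu).
- apply: span_bracketl Hu _ => g [t1 [H1 ->]].
  apply: span_bracketr Hv _ => h [t2 [H2 ->]].
  by apply: sp_gen; exists (Node t1 t2); rewrite /= all_cat H1 H2.
Qed.

Definition lnT (a : seq 'I_n) (cs : seq (seq 'I_n)) : tree :=
  foldl (fun t c => Node t (Leaf c)) (Leaf a) cs.
Definition LN a cs : tens := eval (lnT a cs).

Lemma leaves_foldl (t : tree) cs :
  leaves (foldl (fun t c => Node t (Leaf c)) t cs) = leaves t ++ cs.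
Proof. by elim: cs t => [|c cs IH] t /=; rewrite ?cats0 // IH -catA. Qed.

Lemma leaves_lnT a cs : leaves (lnT a cs) = a :: cs.
Proof. by rewrite /lnT leaves_foldl. Qed.

Lemma LN_rcons a cs c : LN a (rcons cs c) = tbracket (LN a cs) (delta c).
Proof. by rewrite /LN /lnT foldl_rcons. Qed.

Definition PL a L (g : tens) := exists cs, perm_eq cs L /\ g = LN a cs.

Lemma PL_perm a L L' g : perm_eq L L' -> PL a L g -> PL a L' g.
Proof. by move=> HL [cs [Hc ->]]; exists cs; split => //; apply: perm_trans Hc HL. Qed.

Lemma lemD a t2 : forall cs, tspan (PL a (cs ++ leaves t2)) (tbracket (LN a cs) (eval t2)).
Proof.
elim: t2 => [c|U IHU V IHV] cs /=.
  by rewrite -LN_rcons; apply: sp_gen; exists (rcons cs c); rewrite cats1.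
rewrite jacobi; apply: sp_add; last apply: sp_scale.
- apply: span_bracketl (IHU cs) _ => g [cs' [Hc ->]].
  apply: span_mono (IHV cs') => h; apply: PL_perm.
  by rewrite catA perm_cat2r.
- apply: span_bracketl (IHV cs) _ => g [cs' [Hc ->]].
  apply: span_mono (IHU cs') => h; apply: PL_perm.
  apply: perm_trans (perm_cat Hc (perm_refl _)) _.
  by rewrite -catA perm_cat2l perm_catC.
Qed.

Lemma lemC t a : a \in leaves t -> tspan (PL a (rem a (leaves t))) (eval t).
Proof.
elim: t a => [b|t1 IH1 t2 IH2] a /=.
  rewrite inE => /eqP ->; rewrite eqxx; apply: sp_gen; exists [::]; by [].
rewrite mem_cat; case: (boolP (a \in leaves t1)) => H1 /= H.
  apply: span_bracketl (IH1 _ H1) _ => g [cs [Hc ->]].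
  apply: span_mono (lemD a t2 cs) => h; apply: PL_perm.
  by rewrite rem_cat_in // perm_cat2r.
rewrite tbr_anti; apply: sp_scale.
apply: span_bracketl (IH2 _ H) _ => g [cs [Hc ->]].
apply: span_mono (lemD a t1 cs) => h; apply: PL_perm.
rewrite rem_cat_notin // perm_catC perm_cat2l.
by [].
Qed.

End T3.

Section T4.
Variables (F : fieldType) (n : nat).
Notation tens := (tensor F n).
Notation delta := (@delta F n).
Notation LN := (@LN F n).

Lemma lemE (z : 'I_n) q a cs : all (fun c => size c == q) cs -> all (fun c => z \notin c) cs ->
  forall w, z \in take q w -> LN a cs w = delta (flatten (a :: cs)) w.
Proof.
elim/last_ind: cs => [|cs c IH] Hs Hz w Hw.
  by rewrite /= cats0.
move: Hs Hz; rewrite !all_rcons => /andP[/eqP sc Hs] /andP[zc Hz].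
rewrite LN_rcons /tbracket.
have -> : tmul (LN a cs) (delta c) w = tmul (delta (flatten (a :: cs))) (delta c) w.
  rewrite /tmul; apply: eq_bigr => i _.
  case: (boolP (drop i w == c)) => Hd; last by rewrite /delta (negbTE Hd) !mulr0.
  rewrite (IH Hs Hz) // -take_min.
  case: (leqP q i) => Hqi; first by [].
  idtac.
  have zw : z \in w by apply: mem_take Hw.
  move: zw; rewrite -{1}(cat_take_drop i w) mem_cat (eqP Hd) (negbTE zc) orbF //.
have -> : tmul (delta c) (LN a cs) w = 0.
  rewrite /tmul big1 // => i _.
  case: (boolP (take i w == c)) => Ht; last by rewrite /delta (negbTE Ht) mul0r.
  exfalso; move/negP: zc; apply; rewrite -(eqP Ht).
  suff -> : take i w = take q w by [].
  move: (congr1 size (eqP Ht)); rewrite size_take sc.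
  case: ltnP => [_ ->|Hwi Ew] //.
  by rewrite !take_oversize // ?Ew // (leq_trans _ Hwi) // Ew.
rewrite subr0 tmul_delta -cats1 /= flatten_cat /= cats0 catA.
by [].
Qed.
End T4.

End Part1.
Import Part1.
Module Part2.
Local Open Scope ring_scope.

Section W.
Variable F : fieldType.
Hypothesis Finf : infinite_field F.

Lemma many_nonzero (m : nat) : exists s : seq F, uniq (0 :: s) /\ size s = m.
Proof.
elim: m => [|m [s [Us Hs]]]; first by exists [::].
have [x Hx] := Finf (0 :: s).
exists (x :: s); split; last by rewrite /= Hs.
move: Hx Us; rewrite /= !inE negb_or => /andP[x0 xs] /andP[zs ->].
by rewrite negb_or eq_sym x0 xs zs.
Qed.

Lemma exists_nonroot (d : nat) : (0 < d)%N -> exists x : F, x != 0 /\ x ^+ d != 1.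
Proof.
move=> d0; have [s [Us Hs]] := many_nonzero d.+1.
apply/not_all_not_ex; move=> H.
suff : (size s < size (('X^d - 1)%R : {poly F}))%N.
  by rewrite size_XnsubC // Hs ltnn.
apply: max_poly_roots.
- by rewrite -size_poly_eq0 size_XnsubC.
- apply/allP => x xs; rewrite rootE !hornerE subr_eq0.
  have x0 : x != 0 by apply: contraTneq Us => <-; rewrite /= xs.
  case: (boolP (x ^+ d == 1)) => // Hx; exfalso; apply: (H x); split => //.
- by move: Us => /= /andP[].
Qed.
End W.

Lemma exists_sep (F : fieldType) : infinite_field F ->
  forall e1 e2 : nat, e1 != e2 -> exists x : F, x != 0 /\ x ^+ e1 != x ^+ e2.
Proof.
move=> Finf.
suff H : forall e1 e2 : nat, (e1 < e2)%N -> exists x : F, x != 0 /\ x ^+ e1 != x ^+ e2.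
  move=> e1 e2; rewrite neq_ltn => /orP[/H //|/H [x [x0 Hx]]].
  by exists x; split => //; rewrite eq_sym.
move=> e1 e2 lt12.
have [x [x0 Hx]] : exists x : F, x != 0 /\ x ^+ (e2 - e1) != 1 by apply: exists_nonroot; rewrite ?subn_gt0.
exists x; split => //; apply: contraNneq Hx => E.
rewrite -(subnKC (ltnW lt12)) exprD -{1}[x ^+ e1]mulr1 in E.
by apply/eqP; apply: (mulfI (expf_neq0 e1 x0)); rewrite E.
Qed.

Section WS.
Variables (F : fieldType) (n m : nat).
Definition L0 := [seq i <- enum 'I_n | (nat_of_ord i < m)%N].

Lemma uniq_L0 : uniq L0.
Proof. by rewrite filter_uniq ?enum_uniq. Qed.
Lemma mem_L0 (a : 'I_n) : (a \in L0) = (a < m)%N.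
Proof. by rewrite mem_filter mem_enum andbT. Qed.

Lemma prod_ind (a : 'I_n) (x : F) w :
  \prod_(b <- w) (if b == a then x else 1) = x ^+ count_mem a w.
Proof.
elim: w => [|b w IH]; first by rewrite big_nil expr0.
rewrite big_cons IH /= eq_sym; case: (a == b) => /=; by rewrite ?exprS ?mul1r ?add0n.
Qed.

Lemma prod_omega (a : 'I_n) (x : F) :
  \prod_(i < n) (if i == a then x else 1) ^+ @omega n m i = x ^+ (a < m)%N.
Proof.
rewrite (bigD1 a) //= eqxx big1 ?mulr1 // => i /negbTE ->; exact: expr1n.
Qed.

Lemma weight_support (u : tensor F n) : infinite_field F ->
  (forall t : 'I_n -> F, (forall i, t i != 0) ->
    forall w, diag_act t u w = (\prod_(i < n) t i ^+ @omega n m i) * u w) ->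
  forall w, u w != 0 -> perm_eq w L0.
Proof.
move=> Finf Hw w uw; rewrite /perm_eq; apply/allP => a _ /=.
rewrite (count_uniq_mem _ uniq_L0) mem_L0.
case: (boolP (count_mem a w == (a < m)%N)) => // Hne; exfalso.
have [x [x0 Hx]] := exists_sep Finf Hne.
pose t := fun i : 'I_n => if i == a then x else 1.
have tn0 : forall i, t i != 0 by move=> i; rewrite /t; case: (i == a); rewrite ?oner_eq0.
have := Hw t tn0 w; rewrite /diag_act prod_ind prod_omega => /(mulIf uw) E.
by rewrite E eqxx in Hx.
Qed.
End WS.

End Part2.
Import Part2.

Lemma lift_perm_surj m0 (sg : 'S_m0.+1) i0 j0 : sg i0 = j0 ->
  exists s, lift_perm i0 j0 s = sg.
Proof.
move=> si0.
pose ulsf i (s : 'S_m0.+1) k := odflt k (unlift (s i) (s (lift i k))).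
have ulsfK i (s : 'S_m0.+1) k: lift (s i) (ulsf i s k) = s (lift i k).
  rewrite /ulsf; have:= neq_lift i k.
  by rewrite -(can_eq (permK s)) => /unlift_some[] ? ? ->.
have inj_ulsf: injective (ulsf i0 sg).
  apply: can_inj (ulsf (sg i0) sg^-1%g) _ => k'.
  by rewrite {1}/ulsf ulsfK !permK liftK.
exists (perm inj_ulsf); apply/permP=> k.
case: (unliftP i0 k) => [k'|] ->; rewrite ?lift_perm_id //.
by rewrite lift_perm_lift -si0 permE ulsfK.
Qed.

Section P.
Variables (n q k m' : nat).
Hypotheses (hq0 : (0 < q)%N) (hk : (0 < k)%N) (hqk : (q * k = m'.+1)%N) (hmn : (m'.+1 <= n)%N).
Local Notation m := m'.+1.

Lemma hq : (q <= m)%N.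
Proof. by rewrite -hqk leq_pmulr. Qed.

Definition toN (i : 'I_m) : 'I_n := widen_ord hmn i.
Definition zN := toN ord0.
Definition Idx := ('I_q * 'S_m')%type.
Definition sig (x : Idx) : 'S_m := lift_perm (widen_ord hq x.1) ord0 x.2.
Definition word (x : Idx) : seq 'I_n := [seq toN (sig x i) | i <- enum 'I_m].

Lemma toN_inj : injective toN.
Proof. by move=> i j /(congr1 val) /= /val_inj. Qed.

Lemma size_word x : size (word x) = m.
Proof. by rewrite size_map size_enum_ord. Qed.

Lemma nth_word x (i : 'I_m) : nth zN (word x) i = toN (sig x i).
Proof. by rewrite (nth_map ord0) ?size_enum_ord // nth_ord_enum. Qed.

Lemma uniq_word x : uniq (word x).
Proof.
rewrite map_inj_uniq ?enum_uniq // => i j /toN_inj; exact: perm_inj.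
Qed.

Lemma mem_word x (a : 'I_n) : (a \in word x) = (a < m)%N.
Proof.
apply/idP/idP.
  by case/mapP => i _ ->; rewrite /= ltn_ord.
move=> am; pose o : 'I_m := Ordinal am.
have -> : a = toN o by apply: val_inj.
rewrite -[o](permKV (sig x)); exact: map_f (mem_enum _ _).
Qed.

Lemma perm_word x : perm_eq (word x) (L0 n m).
Proof.
apply: uniq_perm; rewrite ?uniq_word ?uniq_L0 // => a.
by rewrite mem_word mem_L0.
Qed.

Lemma z_take x : zN \in take q (word x).
Proof.
have -> : zN = nth zN (take q (word x)) x.1.
  rewrite nth_take // -[nat_of_ord x.1]/(nat_of_ord (widen_ord hq x.1)) nth_word.
  by rewrite /sig lift_perm_id.
by apply: mem_nth; rewrite size_takel ?size_word ?hq.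
Qed.

Lemma word_inj : injective word.
Proof.
move=> [j1 s1] [j2 s2] E.
have Es : forall i, sig (j1, s1) i = sig (j2, s2) i.
  by move=> i; apply: toN_inj; rewrite -!nth_word E.
have Ej : j1 = j2.
  have := Es (widen_ord hq j1); rewrite /sig /= lift_perm_id => /esym.
  rewrite -[X in _ = X](lift_perm_id (widen_ord hq j2) ord0 s2) => /perm_inj.
  by move/(congr1 val) => /= /val_inj.
subst j2; congr (_, _); apply/permP => i.
have := Es (lift (widen_ord hq j1) i); rewrite /sig /= !lift_perm_lift.
exact: lift_inj.
Qed.

Lemma word_surj W : perm_eq W (L0 n m) -> zN \in take q W -> exists x, word x = W.
Proof.
move=> HW zW.
have x0 : Idx := (Ordinal hq0, 1%g).
have sW : size W = m by rewrite (perm_size HW) -(perm_size (perm_word x0)) size_word.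
have uW : uniq W by rewrite (perm_uniq HW) uniq_L0.
have Wlt : forall i, (i < m)%N -> (nth zN W i < m)%N.
  by move=> i Hi; rewrite -mem_L0 -(perm_mem HW) mem_nth // sW.
pose f (i : 'I_m) : 'I_m := inord (nth zN W i).
have f_inj : injective f.
  move=> i j /(congr1 val); rewrite /= !inordK ?Wlt // => E.
  apply/val_inj/eqP; rewrite -(nth_uniq zN _ _ uW) ?sW ?ltn_ord // (val_inj E) eqxx //.
pose sg := perm f_inj.
have zin : zN \in W by apply: mem_take zW.
have iq : (index zN W < q)%N by rewrite -(in_take _ zin).
have im : (index zN W < m)%N by apply: leq_trans iq hq.
have sg0 : sg (Ordinal im) = ord0.
  by apply: val_inj; rewrite /sg permE /f /= nth_index // inordK.
pose jq : 'I_q := Ordinal iq.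
have sgj : sg (widen_ord hq jq) = ord0 by rewrite -sg0; congr (sg _); apply: val_inj.
have [s Hs] := @lift_perm_surj m' sg (widen_ord hq jq) ord0 sgj.
exists (jq, s).
apply: (@eq_from_nth _ zN); rewrite ?size_word ?sW // => i Hi.
rewrite -[i]/(nat_of_ord (Ordinal Hi)) nth_word /sig /= Hs /sg permE /f.
by apply: val_inj; rewrite /= inordK ?Wlt.
Qed.

Lemma card_Idx : #|{: Idx}| = ((q * k)`! %/ k)%N.
Proof.
rewrite card_prod card_ord card_Sn hqk factS -hqk mulnAC mulnK //.
Qed.

Definition blocksOf (w : seq 'I_n) := reshape (nseq k.-1 q) (drop q w).

Lemma sumn_sh : sumn (nseq k.-1 q) = (m - q)%N.
Proof. rewrite sumn_nseq -hqk; case: k hk => // k' _; rewrite mulnS /=; lia. Qed.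

Lemma flatten_blocks w : size w = m -> flatten (blocksOf w) = drop q w.
Proof. by move=> sw; rewrite reshapeKr // size_drop sw sumn_sh. Qed.

Lemma size_blocks w : size w = m -> all (fun c => size c == q) (blocksOf w).
Proof.
move=> sw; have := reshapeKl (sh := nseq k.-1 q) (s := drop q w).
rewrite size_drop sw sumn_sh leqnn => /(_ isT) Hs.
move: Hs; rewrite /shape => Hs.
by rewrite /blocksOf -(all_map size (pred1 q)) Hs all_nseq /= eqxx orbT.
Qed.

Lemma flatten_word w : size w = m -> flatten (take q w :: blocksOf w) = w.
Proof. by move=> sw; rewrite /= flatten_blocks // cat_take_drop. Qed.

Lemma z_blocks x : all (fun c => zN \notin c) (blocksOf (word x)).
Proof.
have zd : zN \notin drop q (word x).
  have := uniq_word x; rewrite -{1}(cat_take_drop q (word x)) cat_uniq => /and3P[_ /hasPn H _].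
  by apply/negP => zd; have := H _ zd; rewrite z_take.
apply/allP => c Hc; apply: contra zd => zc.
rewrite -flatten_blocks ?size_word //; apply/flattenP; by exists c.
Qed.

Variable F : fieldType.

Definition B (x : Idx) : tensor F n := LN F (take q (word x)) (blocksOf (word x)).

Lemma B_eval x y : B x (word y) = ((word y == word x)%:R)%R.
Proof.
rewrite /B (@lemE F n zN q) ?size_blocks ?size_word ?z_blocks ?z_take //.
by rewrite flatten_word ?size_word.
Qed.

Lemma B_leaves x : leaves (lnT (take q (word x)) (blocksOf (word x))) =
  take q (word x) :: blocksOf (word x).
Proof. exact: leaves_lnT. Qed.

Lemma B_support x w : B x w != 0%R -> perm_eq w (word x).
Proof.
move/eval_support; rewrite B_leaves flatten_word ?size_word //.
Qed.

Lemma B_lie x : @inLieGen F n q (B x).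
Proof.
apply: eval_inLie; rewrite B_leaves /= size_blocks ?size_word // andbT.
by rewrite size_takel ?size_word ?hq.
Qed.

Lemma LN_is_B a cs : size a = q -> all (fun c => size c == q) cs -> zN \in a ->
  perm_eq (flatten (a :: cs)) (L0 n m) -> exists x, LN F a cs = B x.
Proof.
move=> sa scs za HW.
have tW : take q (flatten (a :: cs)) = a by rewrite /= take_size_cat.
have zt : zN \in take q (flatten (a :: cs)) by rewrite tW.
have [x Ex] := word_surj HW zt.
exists x; rewrite /B Ex tW; congr (LN F a _).
have shc : shape cs = nseq (size cs) q.
  have H : all (pred1 q) (shape cs) by rewrite /shape all_map.
  by move/all_pred1P: H; rewrite size_map.
have sw : size (flatten (a :: cs)) = m by rewrite -Ex size_word.
have szcs : size cs = k.-1.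
  move: sw; rewrite /= size_cat size_flatten shc sumn_nseq sa -hqk.
  case: k hk => // k' _ /=; nia.
by rewrite /blocksOf /= drop_size_cat // -szcs -shc flattenK.
Qed.

Local Open Scope ring_scope.
Local Notation span := (@tspan F n).
Local Notation tzero := (@tzero F n).

Definition piL (f : tensor F n) : tensor F n :=
  fun w => if perm_eq w (L0 n m) then f w else 0.

Lemma span_pi (P Q : tensor F n -> Prop) f :
  span P f -> (forall g, P g -> span Q (piL g)) -> span Q (piL f).
Proof.
move=> sf PQ; elim: sf => [g /PQ //||g g' _ H1 _ H2|c g _ H].
- have -> : piL (tzero) = tzero.
    by apply: functional_extensionality => w; rewrite /piL /tzero; case: ifP.
  exact: sp0.
- have -> : piL (tadd g g') = tadd (piL g) (piL g').
    by apply: functional_extensionality => w; rewrite /piL /tadd; case: ifP; rewrite ?addr0.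
  exact: sp_add.
- have -> : piL (tscale c g) = tscale c (piL g).
    by apply: functional_extensionality => w; rewrite /piL /tscale; case: ifP; rewrite ?mulr0.
  exact: sp_scale.
Qed.

Lemma zN_L0 : zN \in L0 n m.
Proof. by rewrite mem_L0. Qed.

Lemma good_span t : all (fun b => size b == q) (leaves t) ->
  span (fun g => exists x, g = B x) (piL (eval F t)).
Proof.
move=> Ht.
case: (boolP (perm_eq (flatten (leaves t)) (L0 n m))) => Hg; last first.
  have -> : piL (eval F t) = tzero.
    apply: functional_extensionality => w; rewrite /piL /tzero.
    case: ifP => // Hw; apply/eqP; apply: contraNT Hg => /eval_support Hs.
    by apply: perm_trans Hw; rewrite perm_sym.
  exact: sp0.
have -> : piL (eval F t) = eval F t.
  apply: functional_extensionality => w; rewrite /piL.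
  case: ifP => // /negbT Hw; apply/eqP; rewrite eq_sym; apply: contraNT Hw => /eval_support Hs.
  exact: perm_trans Hs Hg.
have : zN \in flatten (leaves t) by rewrite (perm_mem Hg) zN_L0.
case/flattenP => a al za.
apply: span_flat (@lemC F n t a al) => g [cs [Hc ->]].
have Hp : perm_eq (a :: cs) (leaves t).
  by rewrite perm_sym (perm_trans (perm_to_rem al)) // perm_cons perm_sym.
have := Ht; rewrite -(perm_all _ Hp) /= => /andP[/eqP sa scs].
have [x ->] := LN_is_B sa scs za (perm_trans (perm_flatten Hp) Hg).
by apply: sp_gen; exists x.
Qed.

Theorem main_m : infinite_field F ->
  has_dim (schur_functor (q * k) (@LiePower F n q k)) ((q * k)`! %/ k).
Proof.
move=> Finf.
rewrite -card_Idx /schur_functor /weight_space /LiePower hqk.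
pose b (i : 'I_#|{: Idx}|) := B (enum_val i).
exists b; split; [|split].
- move=> i; split; first split.
  + exact: B_lie.
  + move=> w Hw; apply/eqP; apply: contraNT Hw => /B_support Hs.
    by rewrite (perm_size Hs) size_word.
  + move=> t ht w; rewrite /diag_act.
    case: (boolP (b i w == 0)) => [/eqP ->|/B_support Hs]; first by rewrite !mulr0.
    congr (_ * _); rewrite (perm_big _ (perm_trans Hs (perm_word _))) /L0 big_filter.
    rewrite big_enum_cond /= big_mkcond; apply: eq_bigr => j _.
    by rewrite /omega; case: ifP.
- move=> c Hc i0.
  have := Hc (word (enum_val i0)); rewrite /lincomb (bigD1 i0) //= big1.
    by rewrite /b B_eval eqxx mulr1 addr0.
  move=> i Hi; rewrite /b B_eval.
  have /negbTE -> : word (enum_val i0) != word (enum_val i).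
    by apply: contra Hi => /eqP /word_inj /enum_val_inj ->.
  by rewrite mulr0.
- move=> u [[Lu Hu] Wu].
  have supp := weight_support Finf Wu.
  have Eu : u = piL u.
    apply: functional_extensionality => w; rewrite /piL; case: ifP => // /negbT Hw.
    by apply/eqP; apply: contraNT Hw => H; apply: supp.
  have : span (fun g => exists x, g = B x) u.
    rewrite Eu; apply: span_pi (lie_span Lu) _ => g [t [Ht ->]].
    exact: good_span.
  elim=> [g [x ->]||g g' _ [c1 H1] _ [c2 H2]|a g _ [c1 H1]].
  + exists (fun i => (i == enum_rank x)%:R) => w.
    rewrite /lincomb (bigD1 (enum_rank x)) //= big1 ?eqxx ?mul1r ?addr0.
      by rewrite /b enum_rankK.
    by move=> i /negbTE ->; rewrite mul0r.
  + exists (fun _ => 0) => w; rewrite /lincomb big1 // => i _; by rewrite mul0r.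
  + exists (fun i => c1 i + c2 i) => w; rewrite /tadd H1 H2 /lincomb -big_split.
    by apply: eq_bigr => i _; rewrite mulrDl.
  + exists (fun i => a * c1 i) => w; rewrite /tscale H1 /lincomb mulr_sumr.
    by apply: eq_bigr => i _; rewrite mulrA.
Qed.

End P.

Theorem lemma3p3 (F : fieldType) (p : nat) (q k n : nat) :
  infinite_field F -> (p \in [pchar F])%R ->
  (0 < q)%N -> (0 < k)%N -> (q * k <= n)%N ->
  has_dim (schur_functor (q * k) (@LiePower F n q k)) ((q * k)`! %/ k).
Proof.
move=> Finf _ hq0 hk hn.
have hqk : (q * k = (q * k).-1.+1)%N by rewrite prednK // muln_gt0 hq0 hk.
have hmn : ((q * k).-1.+1 <= n)%N by rewrite -hqk.
exact: (@main_m n q k (q * k).-1 hq0 hk hqk hmn F Finf).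
Qed.
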